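(* Let $\sigma\in\mathbb{C}$ with $\operatorname{Re}\sigma>0$, let $\sqrt\sigma$ be the principal square root, ${\bf L}={\bf I}+(\sigma-1){\bf A}$, $c=\sqrt\sigma$, and $u=(\sqrt\sigma-1)/(\sqrt\sigma+1)$. Then ${\bf L}+c{\bf I}$ is invertible, $|u|<1$, and ${\bf K}=({\bf L}-c{\bf I})({\bf L}+c{\bf I})^{-1}$ satisfies $\|{\bf K}\|\le|u|$. Consequently, with $\Upsilon={\bf I}-2\Gamma$, $\|\Upsilon{\bf K}\|\le|u|$ and $$[-c{\bf I}+\Gamma({\bf L}+c{\bf I})]^{-1}=-2({\bf L}+c{\bf I})^{-1}\sum_{n=0}^\infty(\Upsilon{\bf K})^n\,\Upsilon,$$ the series converging in operator norm with rate of convergence at most $|u|$.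
   Context: ${\cal H}$ is a complex Hilbert space, $\Gamma$ is an orthogonal projection on ${\cal H}$, and ${\bf A}:{\cal H}\to{\cal H}$ is bounded Hermitian with $0\le{\bf A}\le{\bf I}$. For a series $\sum_n\alpha^n{\bf C}_n$ the rate of convergence is $|\alpha|\limsup_n\|{\bf C}_n\|^{1/n}$. *)

(* Defs.v *)
From HB Require Import structures.
From mathcomp Require Import all_boot all_order all_algebra.
From mathcomp Require Import all_classical all_reals all_analysis.
From mathcomp Require Export complex.
Set Implicit Arguments. Unset Strict Implicit. Unset Printing Implicit Defensive.
Import Order.TTheory GRing.Theory Num.Theory.
Import numFieldNormedType.Exports.
Local Open Scope classical_set_scope.
Local Open Scope ring_scope.

Section Hilbert.
Variable R : realType.
Local Notation C := (R[i]).
Variable H : lmodType C.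
Variable ip : H -> H -> C.   (* inner product, linear in the first argument *)

Definition hnorm (x : H) : R := Num.sqrt (complex.Re (ip x x)).

Record is_hilbert : Prop := {
  ip_linl : forall (a : C) (x y z : H), ip (a *: x + y) z = a * ip x z + ip y z;
  ip_conj : forall x y : H, ip y x = conjc (ip x y);
  ip_pos  : forall x : H, 0 <= ip x x;
  ip_def  : forall x : H, ip x x = 0 -> x = 0;
  ip_complete : forall u : nat -> H,
    (forall e : R, 0 < e -> exists N : nat, forall m n : nat,
        (N <= m)%N -> (N <= n)%N -> hnorm (u m - u n) < e) ->
    exists l : H, (fun n => hnorm (u n - l)) @ \oo --> (0 : R) }.

Definition linear_op (T : H -> H) : Prop :=
  forall (a : C) (x y : H), T (a *: x + y) = a *: T x + T y.

Definition bounded_op (T : H -> H) : Prop :=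
  linear_op T /\ exists M : R, forall x : H, hnorm (T x) <= M * hnorm x.

Definition opnorm (T : H -> H) : R :=
  sup [set hnorm (T x) | x in [set x : H | hnorm x <= 1]].

Definition selfadj (T : H -> H) : Prop :=
  forall x y : H, ip (T x) y = ip x (T y).

Definition orth_projection (P : H -> H) : Prop :=
  bounded_op P /\ (forall x, P (P x) = P x) /\ selfadj P.

Definition is_inverse (f g : H -> H) : Prop :=
  (forall x, f (g x) = x) /\ (forall x, g (f x) = x).

Definition oppow (T : H -> H) (n : nat) : H -> H := fun x => iter n T x.

Definition neumann_partial (T : H -> H) (N : nat) : H -> H :=
  fun x => \sum_(n < N) oppow T n x.

Definition op_cvg (S : nat -> H -> H) (T : H -> H) : Prop :=
  (fun N => opnorm (fun x => S N x - T x)) @ \oo --> (0 : R).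

(* limsup_n ||C_n||^{1/n}; the rate of convergence of sum_n alpha^n C_n is
   |alpha| times this quantity *)
Definition root_limsup (Cn : nat -> H -> H) : \bar R :=
  limn_esup (fun n => ((opnorm (Cn n)) `^ (n%:R^-1))%:E).

End Hilbert.

(* Main.v *)
Require Import Defs.
From HB Require Import structures.
From mathcomp Require Import all_boot all_order all_algebra.
From mathcomp Require Import all_classical all_reals all_analysis.
From mathcomp Require Import complex.
From mathcomp Require Import ring lra.
Import Order.TTheory GRing.Theory Num.Theory.
Import numFieldNormedType.Exports.
Local Open Scope classical_set_scope.
Local Open Scope ring_scope.

Set Implicit Arguments. Unset Strict Implicit.
Local Open Scope complex_scope.
Local Notation Re := (@complex.Re _).
Local Notation Im := (@complex.Im _).

Definition nc2 {R : realType} (z : R[i]) : R := Re z ^+ 2 + Im z ^+ 2.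

Lemma cjD (R : realType) (a b : R[i]) : conjc (a + b) = conjc a + conjc b.
Proof. by case: a => ? ?; case: b => ? ? /=; simpc. Qed.
Lemma cjM (R : realType) (a b : R[i]) : conjc (a * b) = conjc a * conjc b.
Proof. by case: a => ? ?; case: b => ? ? /=; simpc. Qed.
Lemma cjN1 (R : realType) : conjc (-1 : R[i]) = -1.
Proof. by rewrite /= oppr0. Qed.
Lemma cj0 (R : realType) : conjc (0 : R[i]) = 0.
Proof. by rewrite /= oppr0. Qed.
Lemma cjR (R : realType) (r : R) : conjc (r%:C) = r%:C.
Proof. by rewrite /= oppr0. Qed.

Section Basics.
Variable R : realType.
Variable H : lmodType R[i].
Variable ip : H -> H -> R[i].
Hypothesis hH : is_hilbert ip.

Lemma ipDl x y z : ip (x + y) z = ip x z + ip y z.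
Proof. by rewrite -{1}[x]scale1r (ip_linl hH) mul1r. Qed.

Lemma ip0l z : ip 0 z = 0.
Proof.
have h := ipDl 0 0 z; rewrite addr0 in h.
by apply: (addrI (ip 0 z)); rewrite addr0 -h.
Qed.

Lemma ipZl a x z : ip (a *: x) z = a * ip x z.
Proof. by rewrite -[a *: x]addr0 (ip_linl hH) ip0l addr0. Qed.

Lemma ipNl x z : ip (- x) z = - ip x z.
Proof. by rewrite -scaleN1r ipZl mulN1r. Qed.

Lemma ipDr x y z : ip x (y + z) = ip x y + ip x z.
Proof. by rewrite (ip_conj hH) ipDl cjD -!(ip_conj hH). Qed.

Lemma ipZr a x z : ip x (a *: z) = conjc a * ip x z.
Proof. by rewrite (ip_conj hH) ipZl cjM -!(ip_conj hH). Qed.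

Lemma ipNr x z : ip x (- z) = - ip x z.
Proof. by rewrite -scaleN1r ipZr cjN1 mulN1r. Qed.

Lemma ip0r z : ip z 0 = 0.
Proof. by rewrite -(scale0r (0:H)) ipZr cj0 mul0r. Qed.

Definition N2 x := Re (ip x x).

Lemma ip_real x : ip x x = (N2 x)%:C.
Proof.
have := ip_pos hH x; rewrite /N2; case: (ip x x) => a b.
by rewrite lecE /= => /andP[/eqP -> _].
Qed.

Lemma N2_ge0 x : 0 <= N2 x.
Proof. by have := ip_pos hH x; rewrite ip_real lecR. Qed.

Lemma hnorm_ge0 x : 0 <= hnorm ip x.
Proof. exact: sqrtr_ge0. Qed.

Lemma hnorm_sq x : hnorm ip x ^+ 2 = N2 x.
Proof. by rewrite /hnorm sqr_sqrtr // N2_ge0. Qed.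

Lemma N2_eq0 x : N2 x = 0 -> x = 0.
Proof. by move=> h; apply: (ip_def hH); rewrite ip_real h. Qed.

Lemma hnorm_eq0 x : hnorm ip x = 0 -> x = 0.
Proof. by move=> h; apply: N2_eq0; rewrite -hnorm_sq h expr0n. Qed.

Lemma N2D x y : N2 (x + y) = N2 x + N2 y + 2%:R * Re (ip x y).
Proof.
rewrite /N2 ipDl !ipDr !raddfD /= [ip y x](ip_conj hH).
case: (ip x y) => a b /=; rewrite -/(N2 x) -/(N2 y); ring.
Qed.

Lemma N2Z a x : N2 (a *: x) = nc2 a * N2 x.
Proof.
rewrite /N2 ipZl ipZr ip_real -/(N2 x) /nc2; case: a => a b /=; simpc => /=; ring.
Qed.

Lemma nc2_ge0 (z : R[i]) : 0 <= nc2 z.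
Proof. by rewrite /nc2 addr_ge0 ?sqr_ge0. Qed.

Lemma normc_nc2 (z : R[i]) : Normc.normc z = Num.sqrt (nc2 z).
Proof. by case: z. Qed.

Lemma nc2_normc (z : R[i]) : Normc.normc z ^+ 2 = nc2 z.
Proof. by rewrite normc_nc2 sqr_sqrtr // nc2_ge0. Qed.

Lemma normc_ge0 (z : R[i]) : 0 <= Normc.normc z.
Proof. by rewrite normc_nc2 sqrtr_ge0. Qed.

Lemma nc2M (z w : R[i]) : nc2 (z * w) = nc2 z * nc2 w.
Proof. by case: z => a b; case: w => c d; rewrite /nc2 /=; simpc => /=; ring. Qed.

Lemma hnormZ a x : hnorm ip (a *: x) = Normc.normc a * hnorm ip x.
Proof. by rewrite /hnorm -/(N2 _) N2Z sqrtrM ?nc2_ge0 // -normc_nc2. Qed.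

Lemma hnormN x : hnorm ip (- x) = hnorm ip x.
Proof. by rewrite -scaleN1r hnormZ normc_nc2 /nc2 /= oppr0 expr0n /= addr0 sqrrN expr1n sqrtr1 mul1r. Qed.

Lemma hnormB x y : hnorm ip (x - y) = hnorm ip (y - x).
Proof. by rewrite -hnormN opprB. Qed.

Lemma hnorm0 : hnorm ip 0 = 0.
Proof. by rewrite /hnorm ip0l /= sqrtr0. Qed.

Lemma CS_gen (f : H -> H -> R[i]) :
  (forall (a : R[i]) x y z, f (a *: x + y) z = a * f x z + f y z) ->
  (forall x y, f y x = conjc (f x y)) ->
  (forall x, 0 <= f x x) ->
  forall x y, nc2 (f x y) <= Re (f x x) * Re (f y y).
Proof.
move=> fl fc fp x y.
have f0 : forall z, f 0 z = 0.
  move=> z; have h := fl 1 0 0 z; rewrite scale1r addr0 mul1r in h.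
  by apply: (addrI (f 0 z)); rewrite addr0 -h.
have fZ : forall a u z, f (a *: u) z = a * f u z.
  by move=> a u z; rewrite -[a *: u]addr0 fl f0 addr0.
have fD : forall u v z, f (u + v) z = f u z + f v z.
  by move=> u v z; rewrite -{1}[u]scale1r fl mul1r.
have fZr : forall a u z, f u (a *: z) = conjc a * f u z.
  by move=> a u z; rewrite fc fZ cjM -fc.
have fDr : forall u v z, f z (u + v) = f z u + f z v.
  by move=> u v z; rewrite fc fD cjD -!fc.
have freal : forall u, f u u = (Re (f u u))%:C.
  by move=> u; have := fp u; case: (f u u) => a b; rewrite lecE /= => /andP[/eqP -> _].
have Fge0 : forall u, 0 <= Re (f u u).
  by move=> u; have := fp u; rewrite freal lecR.
set w := f x y.
have key : forall t : R, 0 <= Re (f x x) - 2%:R * t * nc2 w + t ^+ 2 * nc2 w * Re (f y y).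
  move=> t; have := Fge0 (x + (- (t%:C * w)) *: y).
  rewrite fD !fDr !fZ !fZr (fc x y) -/w (freal y) (freal x).
  rewrite /nc2; case: w => a b /=; simpc => /=.
  move=> h; rewrite !expr2; lra.
have w0 := nc2_ge0 w.
have Fx := Fge0 x; have Fy := Fge0 y.
have [Fy0|Fypos] := eqVneq (Re (f y y)) 0.
  have [W0|Wpos] := eqVneq (nc2 w) 0.
    by rewrite W0 mulr_ge0.
  have Wp : 0 < nc2 w by rewrite lt_def Wpos w0.
  have := key ((Re (f x x) + 1) / (2%:R * nc2 w)).
  have e : 2%:R * ((Re (f x x) + 1) / (2%:R * nc2 w)) * nc2 w = Re (f x x) + 1.
    by field; rewrite Wpos.
  rewrite Fy0 mulr0 addr0 e => h; lra.
have Fyp : 0 < Re (f y y) by rewrite lt_def Fypos Fy.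
have := key (Re (f y y))^-1.
set s := (Re (f y y))^-1.
have e : s * Re (f y y) = 1 by rewrite mulVf.
have e2 : s ^+ 2 * nc2 w * Re (f y y) = s * nc2 w.
  by rewrite expr2 -!mulrA (mulrC (nc2 w)) !mulrA -(mulrA s s) e mulr1.
rewrite e2 => h.
have h2 : 0 <= (Re (f x x) - s * nc2 w) * Re (f y y) by apply: mulr_ge0; lra.
have e3 : (Re (f x x) - s * nc2 w) * Re (f y y) = Re (f x x) * Re (f y y) - nc2 w.
  by rewrite mulrBl -mulrA (mulrC (nc2 w)) mulrA e mul1r.
lra.
Qed.

End Basics.

Set Implicit Arguments. Unset Strict Implicit.
Local Open Scope complex_scope.

Lemma cvg0_epsN {R : realType} {u : nat -> R} : u @ \oo --> (0:R) ->
  forall e : R, 0 < e -> exists N, forall n, (N <= n)%N -> `|u n| < e.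
Proof. move=> hu e he; have := @cvgr0_norm_lt _ _ _ _ _ u hu e he. case => N _ HN. exists N => n hn; exact: HN. Qed.

Lemma epsN_cvg0 {R : realType} (u : nat -> R) :
  (forall e : R, 0 < e -> exists N, forall n, (N <= n)%N -> `|u n| < e) ->
  u @ \oo --> (0:R).
Proof.
move=> h; apply/cvgr0Pnorm_lt => e he.
have [N HN] := h e he. exists N => // n; exact: HN.
Qed.

Lemma le_lim {R : realType} (c d : R) (e : nat -> R) N :
  (forall n, (N <= n)%N -> c <= d + e n) -> e @ \oo --> (0:R) -> c <= d.
Proof.
move=> h he; rewrite leNgt; apply/negP => hlt.
have hcd : 0 < c - d by rewrite subr_gt0.
have [M HM] := cvg0_epsN he hcd.
have := h (maxn N M) (leq_maxl _ _).
have := HM (maxn N M) (leq_maxr _ _).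
move: (e (maxn N M)) => t ht ht2.
have := ler_norm t. lra.
Qed.

Lemma sq_le {R : realType} (a b : R) : 0 <= b -> a ^+ 2 <= b ^+ 2 -> a <= b.
Proof. move=> hb h; rewrite !expr2 in h; nra. Qed.

Lemma geo_small {R : realType} (r : R) : 0 <= r -> r < 1 ->
  forall d : R, 0 < d -> exists N, forall n, (N <= n)%N -> r ^+ n < d.
Proof.
move=> r0 r1 d hd.
have hr : `|r| < 1 by rewrite ger0_norm.
have [N HN] := cvg0_epsN (cvg_expr hr) hd.
exists N => n hn; by have := HN n hn; rewrite ger0_norm ?exprn_ge0.
Qed.

Section Neumann.
Variable R : realType.
Variable H : lmodType R[i].
Variable ip : H -> H -> R[i].
Hypothesis hH : is_hilbert ip.
Local Notation hn := (hnorm ip).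

Lemma ip_re_le x y : Re (ip x y) <= hn x * hn y.
Proof.
apply: sq_le; first by rewrite mulr_ge0 // hnorm_ge0.
have := CS_gen (ip_linl hH) (ip_conj hH) (ip_pos hH) x y.
rewrite exprMn !hnorm_sq // /nc2 /N2 => h.
have := sqr_ge0 (Im (ip x y)). lra.
Qed.

Lemma hnormD x y : hn (x + y) <= hn x + hn y.
Proof.
apply: sq_le; first by rewrite addr_ge0 // hnorm_ge0.
rewrite hnorm_sq // N2D // sqrrD !hnorm_sq //.
have := ip_re_le x y. lra.
Qed.

Lemma hnorm_sum n (f : 'I_n -> H) : hn (\sum_(i < n) f i) <= \sum_(i < n) hn (f i).
Proof.
elim: n f => [|n IH] f; first by rewrite !big_ord0 hnorm0 //.
rewrite !big_ord_recr /=; apply: le_trans (hnormD _ _) _.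
by rewrite lerD2r IH.
Qed.

Lemma hnorm_tri3 x y z : hn (x - z) <= hn (x - y) + hn (y - z).
Proof.
have -> : x - z = (x - y) + (y - z) by rewrite addrA subrK.
exact: hnormD.
Qed.

Lemma lin0 (f : H -> H) : linear_op f -> f 0 = 0.
Proof.
move=> hf; have h := hf 1 0 0; rewrite !scale1r addr0 in h.
by apply: (addrI (f 0)); rewrite addr0 -h.
Qed.

Lemma linD (f : H -> H) : linear_op f -> forall x y, f (x + y) = f x + f y.
Proof. by move=> hf x y; rewrite -{1}[x]scale1r hf scale1r. Qed.

Lemma linZ (f : H -> H) : linear_op f -> forall a x, f (a *: x) = a *: f x.
Proof. by move=> hf a x; rewrite -[a *: x]addr0 hf lin0 // addr0. Qed.

Lemma linN (f : H -> H) : linear_op f -> forall x, f (- x) = - f x.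
Proof. by move=> hf x; rewrite -scaleN1r linZ // scaleN1r. Qed.

Lemma linB (f : H -> H) : linear_op f -> forall x y, f (x - y) = f x - f y.
Proof. by move=> hf x y; rewrite linD // linN. Qed.

Lemma lin_comp (f g : H -> H) : linear_op f -> linear_op g -> linear_op (fun x => f (g x)).
Proof. by move=> hf hg a x y; rewrite hg hf. Qed.

Lemma zero_of_small z : (forall e : R, 0 < e -> hn z <= e) -> z = 0.
Proof.
move=> h; apply: (hnorm_eq0 hH); apply/le_anti/andP; split; last exact: hnorm_ge0.
rewrite leNgt; apply/negP => hz.
have := h (hn z / 2%:R); rewrite divr_gt0 // => /(_ isT). lra.
Qed.

Lemma opnorm_le (f : H -> H) (K : R) : 0 <= K -> (forall x, hn (f x) <= K * hn x) ->
  opnorm ip f <= K.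
Proof.
move=> K0 hf; apply: ge_sup.
  by exists (hn (f 0)), 0 => //=; rewrite hnorm0.
move=> _ [x /= hx <-]; apply: le_trans (hf x) _.
by rewrite -[leRHS]mulr1 ler_wpM2l.
Qed.

Lemma opnorm_ge0 (f : H -> H) (K : R) : (forall x, hn (f x) <= K * hn x) ->
  0 <= opnorm ip f.
Proof.
move=> hf; apply: le_trans (hnorm_ge0 ip (f 0)) _.
apply: ub_le_sup; last by exists 0 => //=; rewrite hnorm0.
exists `|K| => _ [x /= hx <-]; apply: le_trans (hf x) _.
have := hnorm_ge0 ip x; have := ler_norm K; have := normr_ge0 K; move: hx => /=; nra.
Qed.

End Neumann.

Set Implicit Arguments. Unset Strict Implicit.
Local Open Scope complex_scope.

Lemma idS (V : zmodType) (S s b c o x : V) : c = s + o - x -> S - b - x = (S - s) - (b - c) - o.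
Proof.
move=> ->; rewrite opprB !addrA subrK.
rewrite (addrAC S o) (addrAC (S - x) o) addrK addrAC //.
Qed.

Lemma idL (V : zmodType) (a b c d : V) : (a - b) - (c - d) = (a - c) - (b - d).
Proof. by rewrite !opprD !opprK addrACA. Qed.

Section Neumann.
Variable R : realType.
Variable H : lmodType R[i].
Variable ip : H -> H -> R[i].
Hypothesis hH : is_hilbert ip.
Local Notation hn := (hnorm ip).
Variable B : H -> H.
Variable r : R.
Hypothesis hBl : linear_op B.
Hypothesis hr0 : 0 <= r.
Hypothesis hr1 : r < 1.
Hypothesis hB : forall x, hn (B x) <= r * hn x.

Local Notation s := (neumann_partial B).
Let q := (1 - r)^-1.
Lemma q_ge0 : 0 <= q. Proof. by rewrite invr_ge0 subr_ge0 ltW. Qed.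
Lemma qe : (1 - r) * q = 1. Proof. by rewrite mulfV // subr_eq0 gt_eqF. Qed.

Lemma iter_lin n : linear_op (oppow B n).
Proof.
elim: n => [|n IH] a x y; first by [].
by rewrite /oppow !iterS -!/(oppow B n _) IH hBl.
Qed.

Lemma iter_bd n x : hn (oppow B n x) <= r ^+ n * hn x.
Proof.
elim: n => [|n IH]; first by rewrite expr0 mul1r.
rewrite /oppow iterS -/(oppow B n x); apply: le_trans (hB _) _.
by rewrite exprS -mulrA ler_wpM2l.
Qed.

Lemma sS N x : s N.+1 x = s N x + oppow B N x.
Proof. by rewrite /neumann_partial big_ord_recr. Qed.

Lemma s0 x : s 0 x = 0.
Proof. by rewrite /neumann_partial big_ord0. Qed.

Lemma s_lin N : linear_op (s N).
Proof.
move=> a x y; rewrite /neumann_partial scaler_sumr -big_split /=.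
by apply: eq_bigr => i _; rewrite iter_lin.
Qed.

Lemma s_tail m k x : hn (s (m + k) x - s m x) <= (r ^+ m - r ^+ (m + k)) * q * hn x.
Proof.
elim: k => [|k IH]; first by rewrite addn0 subrr (hnorm0 hH) // !subrr !mul0r.
rewrite addnS sS.
have -> : s (m + k) x + oppow B (m + k) x - s m x = (s (m + k) x - s m x) + oppow B (m + k) x.
  by rewrite addrAC.
apply: le_trans (hnormD hH _ _) _.
apply: le_trans (lerD IH (iter_bd _ _)) _.
rewrite exprS; have qe' := qe.
move: (r ^+ (m + k)) (r ^+ m) (hn x) q qe' => P Rm X Q e.
have -> : (Rm - r * P) * Q * X = (Rm - P) * Q * X + P * X * ((1 - r) * Q) by ring.
by rewrite e mulr1.
Qed.

Lemma pow_ge0 n : 0 <= r ^+ n. Proof. exact: exprn_ge0. Qed.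

Lemma s_cauchy m n x : (m <= n)%N -> hn (s n x - s m x) <= r ^+ m * q * hn x.
Proof.
move=> hmn; rewrite -(subnKC hmn); apply: le_trans (s_tail _ _ _) _.
apply: ler_wpM2r; first exact: hnorm_ge0.
apply: ler_wpM2r; first exact: q_ge0.
by rewrite gerBl pow_ge0.
Qed.

Lemma s_cauchy2 N m n x : (N <= m)%N -> (N <= n)%N -> hn (s m x - s n x) <= 2%:R * (r ^+ N * q * hn x).
Proof.
move=> hm hn'; apply: le_trans (hnorm_tri3 hH _ (s N x) _) _.
rewrite [hn (s N x - _)](hnormB hH).
have := s_cauchy x hm; have := s_cauchy x hn'; lra.
Qed.

Lemma lim_ex x : exists l : H, (fun n => hn (s n x - l)) @ \oo --> (0 : R).
Proof.
apply: (ip_complete hH) => e he.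
set X := hn x.
have hX : 0 <= X := hnorm_ge0 ip x.
have hD : 0 < 2%:R * q * X + 1 by have := q_ge0; nra.
have hd : 0 < e / (2%:R * q * X + 1) by rewrite divr_gt0.
have [N HN] := geo_small hr0 hr1 hd.
exists N => m n hm hn' /=.
apply: le_lt_trans (s_cauchy2 x hm hn') _.
have := HN N (leqnn N); rewrite ltr_pdivlMr // => h.
have := pow_ge0 N; have := q_ge0; rewrite -/X; clear HN hd hD; move: (r ^+ N) q X h hX => P Q Y h hY hQ hP; nra.
Qed.

Definition Slim x : H := projT1 (cid (lim_ex x)).
Lemma Slim_spec x : (fun n => hn (s n x - Slim x)) @ \oo --> (0 : R).
Proof. exact: (projT2 (cid (lim_ex x))). Qed.

Lemma S_err N x : hn (s N x - Slim x) <= r ^+ N * q * hn x.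
Proof.
apply: (le_lim (N := N)) (Slim_spec x) => n hn'.
apply: le_trans (hnorm_tri3 hH _ (s n x) _) _.
rewrite lerD2r (hnormB hH); exact: s_cauchy.
Qed.

Lemma S_bd x : hn (Slim x) <= q * hn x.
Proof. by have := S_err 0 x; rewrite s0 sub0r (hnormN hH) expr0 mul1r. Qed.

Lemma small_geo z (K : R) : (forall N, hn z <= K * r ^+ N) -> z = 0.
Proof.
move=> h; apply: (zero_of_small hH) => e he.
have hK : 0 < `|K| + 1 by have := normr_ge0 K; lra.
have hd : 0 < e / (`|K| + 1) by rewrite divr_gt0.
have [N HN] := geo_small hr0 hr1 hd.
apply: le_trans (h N) _.
have := HN N (leqnn N); rewrite ltr_pdivlMr // => h2.
have := pow_ge0 N; have := ler_norm K; have := normr_ge0 K; nra.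
Qed.

Lemma tele (x y z : H) : x - z = (x - y) + (y - z).
Proof. by rewrite addrA subrK. Qed.

Lemma S_lin : linear_op Slim.
Proof.
move=> a x y.
apply/eqP; rewrite -subr_eq0; apply/eqP.
apply: (@small_geo _ (q * (hn (a *: x + y) + Normc.normc a * hn x + hn y))) => N.
rewrite (tele _ (s N (a *: x + y))) (s_lin N a x y).
have -> : a *: s N x + s N y - (a *: Slim x + Slim y) = a *: (s N x - Slim x) + (s N y - Slim y).
  by rewrite scalerBr opprD addrACA.
rewrite addrA; apply: le_trans (hnormD hH _ _) _.
apply: le_trans (lerD (hnormD hH _ _) (lexx _)) _.
rewrite (hnormZ hH) // -(hnormN hH) opprB.
rewrite -(s_lin N a x y).
have h1 := S_err N (a *: x + y); have h2 := S_err N x; have h3 := S_err N y.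
have h2' := ler_wpM2l (normc_ge0 a) h2.
apply: le_trans (lerD (lerD h1 h2') h3) _.
move: (Normc.normc a) (r ^+ N) q => A P Q.
rewrite le_eqVlt; apply/orP; left; apply/eqP; ring.
Qed.

Lemma Bs N x : B (s N x) = s N.+1 x - x.
Proof.
elim: N => [|N IH].
  by rewrite s0 lin0 // sS s0 add0r subrr.
rewrite sS (linD hBl) IH [s N.+2 x]sS.
have -> : B (oppow B N x) = oppow B N.+1 x by [].
by rewrite addrAC.
Qed.

Lemma S_right x : Slim x - B (Slim x) = x.
Proof.
apply/eqP; rewrite -subr_eq0; apply/eqP.
apply: (@small_geo _ ((1 + r) * q * hn x + hn x)) => N.
have e1 : Slim x - B (Slim x) - x =
  (Slim x - s N x) - B (Slim x - s N x) - oppow B N x.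
  by rewrite (linB hBl); apply: idS; rewrite Bs sS.
rewrite e1; apply: le_trans (hnormD hH _ _) _.
rewrite (hnormN hH); apply: le_trans (lerD (hnormD hH _ _) (iter_bd _ _)) _.
rewrite (hnormN hH).
have h1 := S_err N x; rewrite (hnormB hH) in h1.
have h2 := le_trans (hB _) (ler_wpM2l hr0 h1).
apply: le_trans (lerD (lerD h1 h2) (lexx _)) _.
move: (r ^+ N) q (hn x) => P Q X.
rewrite le_eqVlt; apply/orP; left; apply/eqP; ring.
Qed.

Lemma IB_inj z : z - B z = 0 -> z = 0.
Proof.
move=> h; have e : z = B z by apply/eqP; rewrite -subr_eq0 h.
apply: (hnorm_eq0 hH); apply/le_anti/andP; split; last exact: hnorm_ge0.
have := hB z; rewrite -e => h2.
have hrp : 0 < 1 - r by rewrite subr_gt0.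
by rewrite -(pmulr_rle0 _ hrp) mulrBl mul1r subr_le0.
Qed.

Lemma S_left x : Slim (x - B x) = x.
Proof.
set w := Slim (x - B x).
have h := S_right (x - B x); rewrite -/w in h.
apply/eqP; rewrite -subr_eq0; apply/eqP; apply: IB_inj.
by rewrite (linB hBl) idL h subrr.
Qed.

Lemma S_bounded : bounded_op ip Slim.
Proof. split; first exact: S_lin. by exists q => x; exact: S_bd. Qed.

Lemma partial_cvg : op_cvg ip (neumann_partial B) Slim.
Proof.
apply: epsN_cvg0 => e he.
have hq1 : 0 < q + 1 by have := q_ge0; lra.
have hd : 0 < e / (q + 1) by rewrite divr_gt0.
have [N HN] := geo_small hr0 hr1 hd.
exists N => n hn'.
have hb : forall x, hn (s n x - Slim x) <= r ^+ n * q * hn x by move=> x; exact: S_err.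
have h0 := opnorm_ge0 hH hb.
have h1 := opnorm_le hH (mulr_ge0 (pow_ge0 n) q_ge0) hb.
rewrite ger0_norm //.
have := HN n hn'; rewrite ltr_pdivlMr // => h.
have := pow_ge0 n; have := q_ge0.
move: (r ^+ n) q (opnorm _ _) h0 h1 h => P Q O h0 h1 h hQ hP; nra.
Qed.

Lemma opnorm_pow n : opnorm ip (oppow B n) <= r ^+ n.
Proof. apply: (opnorm_le hH); [exact: pow_ge0 | exact: iter_bd]. Qed.

Lemma opnorm_pow_ge0 n : 0 <= opnorm ip (oppow B n).
Proof. exact: (opnorm_ge0 hH (iter_bd n)). Qed.

End Neumann.

Set Implicit Arguments. Unset Strict Implicit.
Local Open Scope complex_scope.

Lemma lin_comb_id (K : comNzRingType) (V : lmodType K) (p q a : K) (x y ax ay : V) :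
  p *: (a *: x + y) + q *: (a *: ax + ay) = a *: (p *: x + q *: ax) + (p *: y + q *: ay).
Proof. by rewrite !scalerDr !scalerA addrACA (mulrC p) (mulrC q). Qed.

Section OpA.
Variable R : realType.
Variable H : lmodType R[i].
Variable ip : H -> H -> R[i].
Hypothesis hH : is_hilbert ip.
Local Notation hn := (hnorm ip).
Variable A : H -> H.
Hypothesis hAl : linear_op A.
Hypothesis hA_herm : selfadj ip A.
Hypothesis hA_pos : forall x : H, 0 <= ip (A x) x.
Hypothesis hA_leI : forall x : H, ip (A x) x <= ip x x.

Definition aR x := Re (ip (A x) x).

Lemma a_real x : ip (A x) x = (aR x)%:C.
Proof.
by have := hA_pos x; rewrite /aR; case: (ip (A x) x) => a b; rewrite lecE /= => /andP[/eqP -> _].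
Qed.

Lemma a_ge0 x : 0 <= aR x.
Proof. by have := hA_pos x; rewrite a_real lecR. Qed.

Lemma a_leX x : aR x <= N2 ip x.
Proof. by have := hA_leI x; rewrite a_real (ip_real hH) lecR. Qed.

Lemma b_le_a x : N2 ip (A x) <= aR x.
Proof.
pose f u v := ip (A u) v.
have fl : forall (a : R[i]) u v w, f (a *: u + v) w = a * f u w + f v w.
  by move=> a u v w; rewrite /f hAl (ip_linl hH).
have fc : forall u v, f v u = conjc (f u v).
  by move=> u v; rewrite /f hA_herm (ip_conj hH).
have := CS_gen fl fc hA_pos x (A x).
rewrite /f (ip_real hH) -/(aR x) -/(aR (A x)).
have h1 : aR (A x) <= N2 ip (A x) by exact: a_leX.
have h0 := a_ge0 x; have h2 := a_ge0 (A x); have h3 := N2_ge0 hH (A x).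
rewrite /nc2 /= expr0n /= addr0 => h.
nra.
Qed.

Lemma quad (p q : R[i]) y :
  N2 ip (p *: y + q *: A y) =
  nc2 p * (N2 ip y - aR y) + nc2 (p + q) * aR y - nc2 q * (aR y - N2 ip (A y)).
Proof.
rewrite (N2D hH) !(N2Z hH) ipZl // ipZr //.
have -> : ip y (A y) = (aR y)%:C by rewrite (ip_conj hH) a_real /= oppr0.
rewrite /nc2; case: p => p1 p2; case: q => q1 q2; simpc => /=. ring.
Qed.

Lemma contr (p q : R[i]) (m : R) : nc2 p <= m -> nc2 (p + q) <= m ->
  forall y, hn (p *: y + q *: A y) <= Num.sqrt m * hn y.
Proof.
move=> hp hpq y.
rewrite /hnorm -/(N2 ip _) quad -sqrtrM; last first.
  by apply: le_trans hp; exact: nc2_ge0.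
apply: ler_wsqrtr.
rewrite -/(N2 ip y).
have := a_ge0 y; have := a_leX y; have := b_le_a y; have := nc2_ge0 q.
move: (nc2 p) (nc2 (p + q)) (nc2 q) (aR y) (N2 ip y) (N2 ip (A y)) hp hpq => P PQ Q a X b hp hpq hQ hb hX ha.
have e1 : 0 <= (m - P) * (X - a) by apply: mulr_ge0; lra.
have e2 : 0 <= (m - PQ) * a by apply: mulr_ge0; lra.
have e3 : 0 <= Q * (a - b) by apply: mulr_ge0; lra.
nra.
Qed.

Lemma comb_lin (p q : R[i]) : linear_op (fun x => p *: x + q *: A x).
Proof. by move=> a x y; rewrite hAl lin_comb_id. Qed.

End OpA.

Set Implicit Arguments. Unset Strict Implicit.
Local Open Scope complex_scope.

Section Cx.
Variable R : realType.
Implicit Types (z w c : R[i]).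

Lemma ReD z w : Re (z + w) = Re z + Re w.
Proof. by case: z => ? ?; case: w => ? ?. Qed.

Lemma nc2N z : nc2 (- z) = nc2 z.
Proof. by case: z => a b; rewrite /nc2 /= !sqrrN. Qed.

Lemma nc2_gt0 z : 0 < Re z -> 0 < nc2 z.
Proof. by case: z => a b /= ha; rewrite /nc2 /=; have := sqr_ge0 b; nra. Qed.

Lemma sqrtc_Re_pos z : 0 < Re z -> 0 < Re (sqrtc z).
Proof.
case: z => a b /= ha; rewrite sqrtr_gt0 divr_gt0 //.
have := sqrtr_ge0 (a ^+ 2 + b ^+ 2); lra.
Qed.

Lemma nc2_1m (b : R) z : nc2 (1 - b%:C * z) = 1 - 2%:R * b * Re z + b ^+ 2 * nc2 z.
Proof. by case: z => x y; rewrite /nc2 /=; simpc => /=; ring. Qed.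

Lemma small_beta (b : R) z : 0 < Re z -> 0 < b -> b * nc2 z <= Re z -> nc2 (1 - b%:C * z) < 1.
Proof.
move=> hz hb h; rewrite nc2_1m.
have e : 0 <= b * (Re z - b * nc2 z) by apply: mulr_ge0; lra.
have e2 : 0 < b * Re z by apply: mulr_gt0.
nra.
Qed.

Lemma u_lt1 c : 0 < Re c -> Normc.normc ((c - 1) / (c + 1)) < 1.
Proof.
move=> hc; rewrite Normc.normcM Normc.normcV.
have hp : 0 < Normc.normc (c + 1).
  rewrite normc_nc2 sqrtr_gt0 nc2_gt0 // ReD /=; lra.
rewrite ltr_pdivrMr // mul1r !normc_nc2 ltr_sqrt; last by rewrite nc2_gt0 // ReD /=; lra.
clear hp; by case: c hc => a b /= hc; rewrite /nc2 /=; simpc => /=; nra.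
Qed.

Lemma c1_neq0 c : 0 < Re c -> c + 1 != 0.
Proof. move=> hc; apply/eqP => h; move: hc; rewrite -[c](addrK 1) h /= sub0r /=; lra. Qed.

Lemma nc2_u1 c : 0 < Re c -> nc2 (1 - c) = nc2 ((c - 1) / (c + 1)) * nc2 (1 + c).
Proof.
move=> hc; rewrite -nc2M -nc2N opprB; congr nc2.
by rewrite (addrC 1 c) mulfVK // c1_neq0.
Qed.

Lemma nc2_u2 c : 0 < Re c -> nc2 (c * c - c) = nc2 ((c - 1) / (c + 1)) * nc2 (c * c + c).
Proof.
move=> hc; rewrite -nc2M; congr nc2.
have h := c1_neq0 hc.
rewrite (_ : c * c + c = c * (c + 1)); last by ring.
by rewrite mulrCA mulfVK //; ring.
Qed.

End Cx.

Set Implicit Arguments. Unset Strict Implicit.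
Local Open Scope complex_scope.

Lemma neumann_pkg (R : realType) (H : lmodType R[i]) (ip : H -> H -> R[i])
  (hH : is_hilbert ip) (B : H -> H) (r : R) (hBl : linear_op B) (hr0 : 0 <= r) (hr1 : r < 1)
  (hB : forall x, hnorm ip (B x) <= r * hnorm ip x) :
  exists S : H -> H, [/\ bounded_op ip S, op_cvg ip (neumann_partial B) S,
    (forall x, S x - B (S x) = x), (forall x, S (x - B x) = x) &
    (forall x, hnorm ip (S x) <= (1 - r)^-1 * hnorm ip x)].
Proof.
exists (Slim hH hr0 hr1 hB); split.
- exact: S_bounded.
- exact: partial_cvg.
- exact: S_right.
- exact: S_left.
- exact: S_bd.
Qed.

Lemma nat_C (R : realType) (n : nat) : (n%:R : R[i]) = (n%:R : R)%:C.
Proof. by rewrite rmorph_nat. Qed.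

Lemma ups_id (K : comNzRingType) (V : lmodType K) (x g : V) :
  x - 2%:R *: g - 2%:R *: (g - 2%:R *: g) = x.
Proof.
have -> : g - 2%:R *: g = - g by rewrite scaler_nat mulr2n opprD addrA subrr sub0r.
by rewrite scalerN opprK subrK.
Qed.

Lemma id1 (K : comNzRingType) (V : lmodType K) (b z w : K) (x y : V) :
  x - ((1 - b * z) *: x + (- (b * w)) *: y) = b *: (z *: x + w *: y).
Proof.
by rewrite scalerBl scale1r scaleNr opprD opprB opprK !scalerDr !scalerA addrA subrKC.
Qed.

Lemma id2 (K : comNzRingType) (V : lmodType K) (c : K) (l w g : V) :
  (l + c *: w - 2%:R *: g) - (l - c *: w) = (- 2%:R) *: (- (c *: w) + g).
Proof.
rewrite [in LHS]opprB addrC !addrA subrK.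
by rewrite scaleNr scalerDr scalerN opprD opprK !scaler_nat !mulr2n.
Qed.

Lemma Lp_eq (K : comNzRingType) (V : lmodType K) (w c : K) (x ax : V) :
  x + w *: ax + c *: x = (1 + c) *: x + w *: ax.
Proof. by rewrite scalerDl scale1r addrAC. Qed.

Lemma Lm_eq (K : comNzRingType) (V : lmodType K) (w c : K) (x ax : V) :
  x + w *: ax - c *: x = (1 - c) *: x + w *: ax.
Proof. by rewrite scalerBl scale1r addrAC. Qed.

Lemma N2B (R : realType) (H : lmodType R[i]) (ip : H -> H -> R[i]) (hH : is_hilbert ip) x y :
  N2 ip (x - y) = N2 ip x + N2 ip y - 2%:R * Re (ip x y).
Proof.
rewrite (N2D hH) -scaleN1r (N2Z hH) (ipZr hH).
have -> : nc2 (-1 : R[i]) = 1 by rewrite /nc2 /= oppr0 expr0n /= addr0 sqrrN expr1n.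
have -> : conjc (-1 : R[i]) = -1 by rewrite /= oppr0.
by case: (ip x y) => a b; rewrite mul1r /=; simpc => /=; ring.
Qed.

Unset Implicit Arguments.
Theorem mainTheorem7 (R : realType) (H : lmodType R[i]) (ip : H -> H -> R[i])
  (hH : is_hilbert ip)
  (A : H -> H) (hA_bd : bounded_op ip A) (hA_herm : selfadj ip A)
  (hA_pos : forall x : H, 0 <= ip (A x) x) (hA_leI : forall x : H, ip (A x) x <= ip x x)
  (Gamma : H -> H) (hGamma : orth_projection ip Gamma)
  (sigma : R[i]) (hsigma : 0 < complex.Re sigma) :
  let c : R[i] := sqrtc sigma in
  let L : H -> H := fun x => x + (sigma - 1) *: A x in
  let u : R[i] := (c - 1) / (c + 1) in
  let Lp : H -> H := fun x => L x + c *: x in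
  let Lm : H -> H := fun x => L x - c *: x in
  let Ups : H -> H := fun x => x - 2%:R *: Gamma x in
  let M : H -> H := fun x => - (c *: x) + Gamma (Lp x) in
  (exists Linv : H -> H, bounded_op ip Linv /\ is_inverse Lp Linv) /\
  Normc.normc u < 1 /\
  forall Linv : H -> H, bounded_op ip Linv -> is_inverse Lp Linv ->
    let K : H -> H := fun x => Lm (Linv x) in
    let T : H -> H := fun x => Ups (K x) in
    opnorm ip K <= Normc.normc u /\
    opnorm ip T <= Normc.normc u /\
    exists S : H -> H,
      bounded_op ip S /\
      op_cvg ip (neumann_partial T) S /\
      is_inverse M (fun x => (- 2%:R) *: Linv (S (Ups x))) /\
      (root_limsup ip (oppow T) <= (Normc.normc u)%:E)%E.
Proof.
move=> c L u Lp Lm Ups M.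
have [hAl _] := hA_bd.
have [[hGl _] [hGG hGsa]] := hGamma.
have hRc : 0 < Re c := sqrtc_Re_pos hsigma.
have csq : c * c = sigma by rewrite -expr2 sqr_sqrtc.
have LpE : forall x, Lp x = (1 + c) *: x + (sigma - 1) *: A x.
  by move=> x; rewrite /Lp /L Lp_eq.
have LmE : forall x, Lm x = (1 - c) *: x + (sigma - 1) *: A x.
  by move=> x; rewrite /Lm /L Lm_eq.
have Lp_lin : linear_op Lp.
  by move=> a x y; rewrite !LpE; exact: (comb_lin hAl (1 + c) (sigma - 1) a x y).
have Lm_lin : linear_op Lm.
  by move=> a x y; rewrite !LmE; exact: (comb_lin hAl (1 - c) (sigma - 1) a x y).
have UpsE : forall x, Ups x = 1 *: x + (- 2%:R) *: Gamma x.
  by move=> x; rewrite scale1r scaleNr.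
have Ups_lin : linear_op Ups.
  by move=> a x y; rewrite !UpsE; exact: (comb_lin hGl 1 (- 2%:R) a x y).
have UpsUps : forall x, Ups (Ups x) = x.
  by move=> x; rewrite {1}/Ups (linB hGl) (linZ hGl) hGG ups_id.
have Ups_iso : forall x, hnorm ip (Ups x) = hnorm ip x.
  move=> x; rewrite /hnorm -!/(N2 ip _) /Ups (N2B hH) (N2Z hH) (ipZr hH) conjc_nat.
  have -> : ip x (Gamma x) = (N2 ip (Gamma x))%:C.
    by rewrite -{1}hGG -hGsa (ip_real hH).
  rewrite !nat_C /nc2 /=; congr Num.sqrt; simpc => /=; ring.
have hu1 : Normc.normc u < 1 := u_lt1 hRc.
have hu0 : 0 <= Normc.normc u := normc_ge0 u.
have part1 : exists Linv : H -> H, bounded_op ip Linv /\ is_inverse Lp Linv.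
  pose z1 := 1 + c; pose z2 := sigma + c.
  have hz1 : 0 < Re z1 by rewrite /z1 ReD /=; lra.
  have hz2 : 0 < Re z2 by rewrite /z2 ReD; lra.
  pose b := Num.min (Re z1 / nc2 z1) (Re z2 / nc2 z2).
  have hb : 0 < b by rewrite lt_min !divr_gt0 // nc2_gt0.
  have hb1 : b * nc2 z1 <= Re z1.
    by rewrite -ler_pdivlMr ?nc2_gt0 // ge_min lexx.
  have hb2 : b * nc2 z2 <= Re z2.
    by rewrite -ler_pdivlMr ?nc2_gt0 // ge_min lexx orbT.
  pose p := 1 - b%:C * z1; pose q := - (b%:C * (sigma - 1)).
  have hpq : p + q = 1 - b%:C * z2 by rewrite /p /q /z1 /z2; ring.
  have hp1 : nc2 p < 1 := small_beta hz1 hb hb1.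
  have hpq1 : nc2 (p + q) < 1 by rewrite hpq; exact: small_beta.
  pose m := Num.max (nc2 p) (nc2 (p + q)).
  have hm1 : m < 1 by rewrite gt_max hp1 hpq1.
  have hm0 : 0 <= m by rewrite le_max nc2_ge0.
  pose r := Num.sqrt m.
  have hr0 : 0 <= r := sqrtr_ge0 m.
  have hr1 : r < 1 by rewrite /r -sqrtr1 ltr_sqrt // ltr01.
  pose B := fun x => p *: x + q *: A x.
  have hBl : linear_op B := comb_lin hAl p q.
  have hB : forall x, hnorm ip (B x) <= r * hnorm ip x.
    move=> x; apply: (contr hH hAl hA_herm hA_pos hA_leI).
      by rewrite le_max lexx.
    by rewrite le_max lexx orbT.
  have [S [[hSl' _] _ hSr hSl hSbd]] := neumann_pkg hH hBl hr0 hr1 hB.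
  have hIB : forall x, x - B x = b%:C *: Lp x.
    by move=> x; rewrite LpE /B /p /q id1.
  have hbC : b%:C != 0 :> R[i].
    by apply/eqP => /(congr1 (@complex.Re R)) /= h; move: hb; rewrite h ltxx.
  exists (fun y => S (b%:C *: y)); split.
    split.
      move=> a x y /=; rewrite -hSl' scalerDr !scalerA mulrC //.
    exists ((1 - r)^-1 * Normc.normc b%:C) => x.
    apply: le_trans (hSbd _) _; rewrite (hnormZ hH) mulrA //.
  split => [y|x] /=.
    apply: (scalerI hbC); rewrite -hIB; exact: hSr.
  by rewrite -hIB hSl.
split; first exact: part1.
split; first exact: hu1.
move=> Linv [hLl _] [hLpL hLLp] K T.
have Kbound : forall y, hnorm ip (Lm y) <= Normc.normc u * hnorm ip (Lp y).
  move=> y; rewrite /hnorm -!/(N2 ip _) LmE LpE !(quad hH hA_pos).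
  have -> : 1 - c + (sigma - 1) = c * c - c by rewrite -csq; ring.
  have -> : 1 + c + (sigma - 1) = c * c + c by rewrite -csq; ring.
  rewrite (nc2_u1 hRc) (nc2_u2 hRc) -/u normc_nc2 -sqrtrM ?nc2_ge0 //.
  apply: ler_wsqrtr.
  have hU : nc2 u <= 1.
    rewrite -(nc2_normc u); have := hu1; have := hu0; nra.
  have := b_le_a hH hAl hA_herm hA_pos hA_leI y.
  have := nc2_ge0 (sigma - 1).
  move: (nc2 u) (nc2 (sigma - 1)) (aR ip A y) (N2 ip (A y)) hU => U Q a bb hU hQ hab.
  have e : 0 <= (1 - U) * (Q * (a - bb)) by apply: mulr_ge0; [lra | apply: mulr_ge0; lra].
  nra.
have hK : forall x, hnorm ip (K x) <= Normc.normc u * hnorm ip x.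
  by move=> x; rewrite /K; apply: le_trans (Kbound _) _; rewrite hLpL.
have hT : forall x, hnorm ip (T x) <= Normc.normc u * hnorm ip x.
  by move=> x; rewrite /T Ups_iso; exact: hK.
split; first exact: (opnorm_le hH hu0 hK).
split; first exact: (opnorm_le hH hu0 hT).
have hTl : linear_op T := lin_comp Ups_lin (lin_comp Lm_lin hLl).
have [S [hSb hScvg hSr hSl _]] := neumann_pkg hH hTl hu0 hu1 hT.
have hSlin : linear_op S by case: hSb.
have key : forall w, Ups (Lp w - T (Lp w)) = (- 2%:R) *: M w.
  move=> w; rewrite /T /K hLLp (linB Ups_lin) UpsUps.
  rewrite /Ups /M /Lp /Lm; exact: id2.
have hm2 : (- 2%:R : R[i]) != 0 by rewrite oppr_eq0 pnatr_eq0.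
exists S; split => //; split => //; split.
  split => [x|w] /=.
    apply: (scalerI hm2); rewrite -key.
    rewrite (linZ Lp_lin) hLpL (linZ hTl) -scalerBr hSr (linZ Ups_lin) UpsUps //.
  by rewrite -(linZ hLl) -(linZ hSlin) -(linZ Ups_lin) -key UpsUps hSl hLLp.
rewrite /root_limsup limn_esup_lim.
set f := fun n => _.
rewrite (cvg_lim (@ereal_hausdorff R) (@cvg_esups_inf R f)).
apply: le_trans (@ereal_inf_lbound R _ (esups f 1) _) _; first by exists 1.
apply: ge_ereal_sup => _ [k /= hk <-].
rewrite /f lee_fin.
have hO0 := opnorm_pow_ge0 hH hu0 hT k.
have hO1 := opnorm_pow hH hu0 hT k.
have hk0 : (k%:R : R) != 0 by rewrite pnatr_eq0 -lt0n.
apply: le_trans (ge0_ler_powR _ _ _ hO1) _.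
- by rewrite invr_ge0 ler0n.
- by rewrite nnegrE.
- by rewrite nnegrE exprn_ge0.
by rewrite -powR_mulrn // -powRrM mulfV // powRr1.
Qed.
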